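(* Consider binary floating-point arithmetic with precision $p \ge 2$ and unit round-off $u = 2^{-p}$, where every operation (including square root) is correctly rounded to nearest, $\mathrm{RN}$. Let $x,y$ be floating-point numbers and consider the algorithm $s_x \gets \mathrm{RN}(x^2)$, $s_y \gets \mathrm{RN}(y^2)$, $\sigma \gets \mathrm{RN}(s_x+s_y)$, $\rho \gets \mathrm{RN}(\sqrt{\sigma})$. Barring underflow and overflow, for $u \le 1/4$ the relative error $R = \rho/\sqrt{x^2+y^2} - 1$ satisfies \[ |R| \le \frac{1+3u-\sqrt{1+2u}}{1+u} = 2u + \kappa u^2, \quad\text{with } \kappa < -\tfrac54. \]
   Context: A radix-2 floating-point number of precision $p$ has the form $M\cdot 2^{e-p+1}$ with integers $|M|\le 2^p-1$ and $e_{\min}\le e\le e_{\max}$. $\mathrm{RN}$ denotes rounding to nearest (ties-to-even) into this set. ''Barring underflow and overflow'' means all intermediate results lie in the normal range $2^{e_{\min}}\le |t|\le (2^p-1)2^{e_{\max}-p+1}$ (or are zero). The unit round-off is $u=2^{-p}$. *)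

(* Defs.v *)
From Stdlib Require Import Reals ZArith Lra Lia.
Open Scope R_scope.

Definition is_float (p emin emax : Z) (x : R) : Prop :=
  exists M e : Z,
    x = IZR M * powerRZ 2 (e - p + 1) /\
    (Z.abs M <= 2 ^ p - 1)%Z /\ (emin <= e <= emax)%Z.

(* x has an even integral significand in its canonical representation
   (normalized, i.e. 2^(p-1) <= |M|, or with minimal exponent e = emin). *)
Definition is_even_float (p emin emax : Z) (x : R) : Prop :=
  exists M e : Z,
    x = IZR M * powerRZ 2 (e - p + 1) /\
    (Z.abs M <= 2 ^ p - 1)%Z /\ (emin <= e <= emax)%Z /\
    (e = emin \/ (2 ^ (p - 1) <= Z.abs M)%Z) /\
    Z.Even M.

(* r = RN(t): round to nearest, ties to even. *)
Definition is_RN (p emin emax : Z) (t r : R) : Prop :=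
  is_float p emin emax r /\
  (forall f, is_float p emin emax f -> Rabs (r - t) <= Rabs (f - t)) /\
  (forall f, is_float p emin emax f -> f <> r ->
     Rabs (f - t) = Rabs (r - t) -> is_even_float p emin emax r).

(* t is zero or lies in the normal range (no underflow, no overflow). *)
Definition in_range (p emin emax : Z) (t : R) : Prop :=
  t = 0 \/
  (powerRZ 2 emin <= Rabs t <= IZR (2 ^ p - 1) * powerRZ 2 (emax - p + 1)).

Definition unit_roundoff (p : Z) : R := powerRZ 2 (- p).

(* Main.v *)
Require Import Defs.
From Stdlib Require Import Reals ZArith Lra Lia Psatz.
Open Scope R_scope.

Notation P z := (powerRZ 2 z).

Lemma P_pos z : 0 < P z.
Proof. apply powerRZ_lt; lra. Qed.

Lemma P_add a b : P (a + b) = P a * P b.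
Proof. apply powerRZ_add; lra. Qed.

Lemma P_lt a b : (a < b)%Z -> P a < P b.
Proof. intro H. rewrite !powerRZ_Rpower by lra. apply Rpower_lt; [lra|]. apply IZR_lt; exact H. Qed.

Lemma P_le a b : (a <= b)%Z -> P a <= P b.
Proof. intro H. destruct (Z.eq_dec a b) as [->|]. lra. left; apply P_lt; lia. Qed.

Lemma P_lt_inv a b : P a < P b -> (a < b)%Z.
Proof. intro H. destruct (Z_lt_le_dec a b) as [|h]; auto. apply P_le in h. lra. Qed.

Lemma P_1 : P 1 = 2.
Proof. simpl. lra. Qed.

Lemma IZR_pow2 k : (0 <= k)%Z -> IZR (2 ^ k) = P k.
Proof.
  intro H. rewrite <- (Z2Nat.id k H). rewrite <- pow_IZR, pow_powerRZ. reflexivity.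
Qed.

Lemma exp_exists t : 0 < t -> exists e, P e <= t < P (e + 1).
Proof.
  intro Ht. exists (Int_part (ln t / ln 2)).
  destruct (base_Int_part (ln t / ln 2)) as [H1 H2].
  assert (L2 : 0 < ln 2). { rewrite <- ln_1. apply ln_increasing; lra. }
  rewrite !powerRZ_Rpower by lra. unfold Rpower.
  rewrite <- (exp_ln t) at 2 3 by lra. rewrite plus_IZR.
  split.
  - assert (IZR (Int_part (ln t / ln 2)) * ln 2 <= ln t).
    { apply Rmult_le_compat_r with (r := ln 2) in H1; [|lra].
      unfold Rdiv in H1. rewrite Rmult_assoc, Rinv_l in H1; lra. }
    destruct H; [left; apply exp_increasing; lra| rewrite H; lra].
  - apply exp_increasing.
    assert (ln t / ln 2 < IZR (Int_part (ln t / ln 2)) + 1) by lra.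
    apply Rmult_lt_compat_r with (r := ln 2) in H; [|lra].
    unfold Rdiv in H. rewrite Rmult_assoc, Rinv_l in H; lra.
Qed.

Lemma Pexp_split a b : P a = P (a - b) * P b.
Proof. rewrite <- P_add. f_equal. lia. Qed.

Lemma pow2_facts p : (2 <= p)%Z -> (1 <= 2 ^ (p - 1))%Z /\ (2 ^ p = 2 * 2 ^ (p - 1))%Z.
Proof.
  intro Hp. split.
  - assert (0 < 2 ^ (p-1))%Z by (apply Z.pow_pos_nonneg; lia). lia.
  - replace p with (Z.succ (p - 1)) at 1 by lia. rewrite Z.pow_succ_r by lia. lia.
Qed.

Lemma float_P p emin emax e : (2 <= p)%Z -> (emin <= e <= emax)%Z -> is_float p emin emax (P e).
Proof.
  intros Hp He. destruct (pow2_facts p Hp) as [h1 h2].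
  exists (2 ^ (p-1))%Z, e. split; [|split; [lia|lia]].
  rewrite IZR_pow2 by lia. rewrite <- P_add. f_equal. lia.
Qed.

Lemma near_ulp p emin emax t e : (2 <= p)%Z -> (emin <= e <= emax)%Z ->
  P e <= t < P (e + 1) -> t <= IZR (2 ^ p - 1) * P (emax - p + 1) ->
  exists f, is_float p emin emax f /\ Rabs (f - t) <= P (e - p).
Proof.
  intros Hp He [Ht1 Ht2] Hmax.
  destruct (pow2_facts p Hp) as [h1 h2].
  set (ulp := P (e - p + 1)).
  assert (Hu : 0 < ulp) by apply P_pos.
  assert (E1 : P e = P (p - 1) * ulp). { unfold ulp. rewrite <- P_add. f_equal. lia. }
  assert (E2 : P (e + 1) = P p * ulp). { unfold ulp. rewrite <- P_add. f_equal. lia. }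
  assert (E3 : ulp = 2 * P (e - p)). { unfold ulp. rewrite P_add, P_1. lra. }
  assert (I1 : IZR (2 ^ (p - 1)) = P (p - 1)) by (apply IZR_pow2; lia).
  assert (I2 : IZR (2 ^ p) = P p) by (apply IZR_pow2; lia).
  set (q := t / ulp).
  assert (Hq : t = q * ulp) by (unfold q; field; lra).
  set (n := Int_part (q + / 2)).
  destruct (base_Int_part (q + / 2)) as [B1 B2]. fold n in B1, B2.
  assert (Hq1 : P (p - 1) <= q) by (rewrite Hq, E1 in *; nra).
  assert (Hq2 : q < P p) by (rewrite Hq, E2 in *; nra).
  assert (Hn1 : (2 ^ (p - 1) - 1 < n)%Z).
  { apply lt_IZR. rewrite minus_IZR, I1. lra. }
  assert (Hn2 : (n < 2 ^ p + 1)%Z).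
  { apply lt_IZR. rewrite plus_IZR, I2. lra. }
  assert (Hd : Rabs (IZR n * ulp - t) <= P (e - p)).
  { rewrite Hq. replace (IZR n * ulp - q * ulp) with ((IZR n - q) * ulp) by ring.
    rewrite Rabs_mult, (Rabs_right ulp) by lra.
    assert (Rabs (IZR n - q) <= / 2) by (apply Rabs_le; lra). nra. }
  destruct (Z.eq_dec n (2 ^ p)) as [Hn|Hn].
  - destruct (Z.eq_dec e emax) as [He'|He'].
    + exfalso. subst e. rewrite minus_IZR, I2 in Hmax. fold ulp in Hmax.
      assert (q <= P p - 1) by (rewrite Hq in Hmax; nra).
      rewrite Hn, I2 in B1. lra.
    + exists (IZR n * ulp). split; [|exact Hd].
      exists (2 ^ (p - 1))%Z, (e + 1)%Z. split; [|split; lia].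
      rewrite Hn, I1, I2. unfold ulp. rewrite <- !P_add. f_equal. lia.
  - exists (IZR n * ulp). split; [|exact Hd].
    exists n, e. split; [reflexivity|split; lia].
Qed.

Lemma exp_range p emin emax t : (2 <= p)%Z -> 0 < t -> P emin <= t ->
  t <= IZR (2 ^ p - 1) * P (emax - p + 1) ->
  exists e, (emin <= e <= emax)%Z /\ P e <= t < P (e + 1).
Proof.
  intros Hp Ht Hmin Hmax. destruct (exp_exists t Ht) as [e [H1 H2]].
  exists e. split; [|lra]. split.
  - assert (emin < e + 1)%Z by (apply P_lt_inv; lra). lia.
  - assert (P e < P (emax + 1)).
    { apply Rle_lt_trans with t; [lra|]. apply Rle_lt_trans with (1 := Hmax).
      rewrite minus_IZR, IZR_pow2 by lia.
      assert (P p * P (emax - p + 1) = P (emax + 1)) by (rewrite <- P_add; f_equal; lia).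
      pose proof (P_pos (emax - p + 1)). nra. }
    apply P_lt_inv in H. lia.
Qed.

Lemma rel_a p emin emax t r : (2 <= p)%Z -> 0 < t -> P emin <= t ->
  t <= IZR (2 ^ p - 1) * P (emax - p + 1) ->
  (forall f, is_float p emin emax f -> Rabs (r - t) <= Rabs (f - t)) ->
  Rabs (r - t) <= P (- p) / (1 + P (- p)) * t.
Proof.
  intros Hp Ht Hmin Hmax Hn.
  destruct (exp_range p emin emax t Hp Ht Hmin Hmax) as [e [He [H1 H2]]].
  set (u := P (- p)). assert (Hu : 0 < u) by apply P_pos.
  assert (Eu : P (e - p) = P e * u) by (unfold u; rewrite <- P_add; f_equal; lia).
  pose proof (P_pos e).
  destruct (Rle_lt_dec t (P e * (1 + u))).
  - eapply Rle_trans. apply Hn. apply (float_P p emin emax e Hp He).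
    rewrite Rabs_left1 by lra.
    apply Rmult_le_reg_r with (1 + u); [lra|].
    unfold Rdiv. field_simplify; nra.
  - destruct (near_ulp p emin emax t e Hp He (conj H1 H2) Hmax) as [f [Hf Hd]].
    eapply Rle_trans. apply Hn. exact Hf. eapply Rle_trans. exact Hd.
    rewrite Eu.
    apply Rmult_le_reg_r with (1 + u); [lra|].
    unfold Rdiv. field_simplify; nra.
Qed.

Lemma sq_ge a c : 0 <= a -> 0 <= c -> c * c <= a * a -> c <= a.
Proof. intros. nra. Qed.

Lemma alg1 u : 0 < u -> u <= 1/4 ->
  u <= (1 - 1 / sqrt (1 + 2 * u)) * sqrt (1 + 4 * u).
Proof.
  intros H0 H1.
  set (a := sqrt (1 + 2 * u)). set (b := sqrt (1 + 4 * u)).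
  assert (Ha : a * a = 1 + 2 * u) by (apply sqrt_sqrt; lra).
  assert (Hb : b * b = 1 + 4 * u) by (apply sqrt_sqrt; lra).
  assert (a0 : 0 <= a) by apply sqrt_pos. assert (b0 : 0 <= b) by apply sqrt_pos.
  assert (a1 : 1 <= a) by (apply sq_ge; nra).
  assert (a2 : a <= 1 + u) by (apply sq_ge; nra).
  assert (b2 : 1 + 2 * u - 2 * u * u <= b) by (apply sq_ge; nra).
  assert (u * a <= (a - 1) * b).
  { assert (Hk : a * a + a <= 2 * b) by nra.
    assert (u * a * (a + 1) <= 2 * u * b) by nra.
    apply Rmult_le_reg_r with (a + 1); [lra|].
    replace ((a - 1) * b * (a + 1)) with ((a * a - 1) * b) by ring. rewrite Ha. nra. }
  apply Rmult_le_reg_r with a; [lra|].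
  field_simplify; try lra.
Qed.

Lemma alg2 u : 0 < u -> u <= 1/4 ->
  ((1 + 3 * u - sqrt (1 + 2 * u)) / (1 + u) - 2 * u) / (u * u) < - 5 / 4.
Proof.
  intros H0 H1.
  set (a := sqrt (1 + 2 * u)).
  assert (Ha : a * a = 1 + 2 * u) by (apply sqrt_sqrt; lra).
  assert (a0 : 0 <= a) by apply sqrt_pos.
  set (c := 1 + u - 3/4 * u * u + 5/4 * u * u * u).
  assert (c < a).
  { assert (0 <= c) by (unfold c; nra).
    destruct (Rlt_le_dec c a); auto. exfalso.
    assert (a * a <= c * c) by nra.
    assert (u * u * u <= u * u / 4) by nra.
    assert (u * u * u * u <= u * u / 16) by nra.
    unfold c in *. nra. }
  unfold c in H.
  apply Rmult_lt_reg_r with (u * u); [nra|].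
  unfold Rdiv. field_simplify; [|nra].
  apply (Rmult_lt_reg_r (u + 1)); [lra|]. unfold Rdiv. rewrite Rmult_assoc, Rinv_l by lra. nra.
Qed.

Lemma rel_b p emin emax t r : (2 <= p)%Z -> P (- p) <= 1/4 -> 0 < t -> P emin <= t ->
  t <= IZR (2 ^ p - 1) * P (emax - p + 1) ->
  is_float p emin emax (t * t) ->
  (forall f, is_float p emin emax f -> Rabs (r - t) <= Rabs (f - t)) ->
  Rabs (r - t) <= (1 - 1 / sqrt (1 + 2 * P (- p))) * t.
Proof.
  intros Hp Hu4 Ht Hmin Hmax [M [k [Hs [HM Hk]]]] Hn.
  destruct (exp_range p emin emax t Hp Ht Hmin Hmax) as [e [He [H1 H2]]].
  destruct (pow2_facts p Hp) as [h1 h2].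
  set (u := P (- p)) in *. assert (Hu : 0 < u) by apply P_pos.
  assert (Eu : P (e - p) = P e * u) by (unfold u; rewrite <- P_add; f_equal; lia).
  pose proof (P_pos e) as Pe0.
  set (a := sqrt (1 + 2 * u)).
  assert (Ha : a * a = 1 + 2 * u) by (apply sqrt_sqrt; lra).
  assert (a0 : 0 <= a) by apply sqrt_pos.
  assert (a1 : 1 <= a) by (apply sq_ge; nra).
  assert (D0 : 0 <= 1 - 1 / a).
  { unfold Rdiv. rewrite Rmult_1_l. assert (/ a <= 1). { rewrite <- Rinv_1. apply Rinv_le_contravar; lra. } lra. }
  assert (Hee : P e * P e <= t * t) by nra.
  assert (EPe : P e * P e = P (2 * e)) by (rewrite <- P_add; f_equal; lia).
  assert (HM0 : 0 < IZR M).
  { pose proof (P_pos (k - p + 1)). assert (Htt : 0 < t * t) by nra. rewrite Hs in Htt.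
    destruct (Rlt_le_dec 0 (IZR M)); auto. nra. }
  assert (Hk2 : (2 * e <= k)%Z).
  { destruct (Z_lt_le_dec k (2 * e)) as [hk|]; auto. exfalso.
    assert (IZR M <= P p - 1).
    { rewrite <- IZR_pow2 by lia. rewrite <- minus_IZR. apply IZR_le. lia. }
    assert (P (k + 1) <= P (2 * e)) by (apply P_le; lia).
    assert (P (k + 1) = P p * P (k - p + 1)) by (rewrite <- P_add; f_equal; lia).
    pose proof (P_pos (k - p + 1)). nra. }
  set (N := (M * 2 ^ (k - 2 * e))%Z).
  set (w := P (2 * e - p + 1)).
  assert (Hw : w = 2 * u * (P e * P e)).
  { unfold w, u. rewrite EPe. replace (2 * e - p + 1)%Z with (- p + 1 + 2 * e)%Z by lia.
    rewrite !P_add, P_1. ring. }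
  assert (HN : t * t = IZR N * w).
  { unfold N, w. rewrite Hs, mult_IZR, IZR_pow2 by lia. rewrite Rmult_assoc, <- P_add.
    do 2 f_equal. lia. }
  assert (Hpw : P (p - 1) * w = P e * P e).
  { unfold w. rewrite EPe, <- P_add. f_equal. lia. }
  assert (HN1 : (2 ^ (p - 1) <= N)%Z).
  { apply le_IZR. rewrite IZR_pow2 by lia. pose proof (P_pos (2 * e - p + 1)). fold w in H.
    apply Rmult_le_reg_r with w; [lra|]. nra. }
  destruct (Z.eq_dec N (2 ^ (p - 1))) as [E|E].
  - assert (t * t = P e * P e) by (rewrite HN, E, IZR_pow2 by lia; lra).
    assert (t = P e) by (apply Rle_antisym; apply sq_ge; nra).
    eapply Rle_trans. apply Hn. apply (float_P p emin emax e Hp He).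
    rewrite H0, Rminus_diag, Rabs_R0. nra.
  - destruct (Z.eq_dec N (2 ^ (p - 1) + 1)) as [E'|E'].
    + assert (t * t = (a * P e) * (a * P e)).
      { rewrite HN, E', plus_IZR, IZR_pow2 by lia. nra. }
      assert (t = a * P e) by (apply Rle_antisym; apply sq_ge; nra).
      eapply Rle_trans. apply Hn. apply (float_P p emin emax e Hp He).
      rewrite Rabs_left1 by nra. rewrite H0.
      replace ((1 - 1 / a) * (a * P e)) with (a * P e - P e) by (field; lra). lra.
    + assert (IZR (2 ^ (p - 1) + 2) <= IZR N) by (apply IZR_le; lia).
      rewrite plus_IZR, IZR_pow2 in H by lia.
      set (b := sqrt (1 + 4 * u)).
      assert (Hb : b * b = 1 + 4 * u) by (apply sqrt_sqrt; lra).
      assert (b0 : 0 <= b) by apply sqrt_pos.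
      assert (w0 : 0 < w) by apply P_pos.
      assert (t * t >= (P (p - 1) + 2) * w) by (rewrite HN; apply Rle_ge, Rmult_le_compat_r; lra).
      assert (t * t >= (b * P e) * (b * P e)) by nra.
      assert (b * P e <= t) by (apply sq_ge; nra).
      destruct (near_ulp p emin emax t e Hp He (conj H1 H2) Hmax) as [f [Hf Hd]].
      eapply Rle_trans. apply Hn. exact Hf. eapply Rle_trans. exact Hd.
      rewrite Eu. pose proof (alg1 u Hu Hu4) as Halg. fold a b in Halg.
      apply Rle_trans with ((1 - 1 / a) * b * P e).
      * rewrite (Rmult_comm (P e) u). apply Rmult_le_compat_r; [lra|exact Halg].
      * rewrite Rmult_assoc. apply Rmult_le_compat_l; lra.
Qed.

Lemma Rabs_le_inv a b : Rabs a <= b -> - b <= a <= b.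
Proof. unfold Rabs; destruct (Rcase_abs a); lra. Qed.

Lemma rnd_a p emin emax t r : (2 <= p)%Z -> (exists e, (emin <= e <= emax)%Z) ->
  0 <= t -> in_range p emin emax t -> is_RN p emin emax t r ->
  Rabs (r - t) <= P (- p) / (1 + P (- p)) * t.
Proof.
  intros Hp [e0 He0] Ht Hr [Hf [Hn _]].
  destruct Hr as [Z0|[Hr1 Hr2]].
  - subst t. assert (F0 : is_float p emin emax 0).
    { exists 0%Z, e0. split; [simpl; ring|split; lia]. }
    specialize (Hn 0 F0). rewrite Rminus_diag, Rabs_R0 in Hn. rewrite Rmult_0_r. exact Hn.
  - rewrite Rabs_right in Hr1, Hr2 by lra. pose proof (P_pos emin).
    apply rel_a with emin emax; auto. lra.
Qed.

Theorem theorem1 (p emin emax : Z) (x y sx sy sigma rho : R) :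
  (2 <= p)%Z ->
  unit_roundoff p <= 1 / 4 ->
  is_float p emin emax x ->
  is_float p emin emax y ->
  (x <> 0 \/ y <> 0) ->
  in_range p emin emax (x * x) ->
  in_range p emin emax (y * y) ->
  in_range p emin emax (sx + sy) ->
  in_range p emin emax (sqrt sigma) ->
  is_RN p emin emax (x * x) sx ->
  is_RN p emin emax (y * y) sy ->
  is_RN p emin emax (sx + sy) sigma ->
  is_RN p emin emax (sqrt sigma) rho ->
  let u := unit_roundoff p in
  let B := (1 + 3 * u - sqrt (1 + 2 * u)) / (1 + u) in
  Rabs (rho / sqrt (x * x + y * y) - 1) <= B /\
  (B - 2 * u) / (u * u) < - 5 / 4.
Proof.
  intros Hp Hu4 Fx Fy Hxy Rx Ry Rs Rt RNx RNy RNs RNt u B.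
  unfold unit_roundoff in *. fold u in Hu4 |- *.
  assert (Hu : 0 < u) by apply P_pos.
  split; [|apply alg2; lra].
  assert (Hex : exists e, (emin <= e <= emax)%Z) by (destruct Fx as [M [e [_ [_ He]]]]; eauto).
  assert (S0 : 0 < x * x + y * y) by (destruct Hxy; nra).
  set (S := x * x + y * y) in *.
  set (eps := u / (1 + u)).
  assert (Eeps : eps = u / (1 + u)) by reflexivity.
  assert (e0 : 0 < eps) by (unfold eps; apply Rdiv_lt_0_compat; lra).
  assert (e1 : eps < 1) by (unfold eps; apply (Rmult_lt_reg_r (1 + u)); [lra|]; unfold Rdiv; rewrite Rmult_assoc, Rinv_l; lra).
  pose proof (rnd_a p emin emax (x * x) sx Hp Hex ltac:(nra) Rx RNx) as Ex.
  pose proof (rnd_a p emin emax (y * y) sy Hp Hex ltac:(nra) Ry RNy) as Ey.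
  fold u eps in Ex, Ey.
  apply Rabs_le_inv in Ex. apply Rabs_le_inv in Ey.
  set (T := sx + sy) in *.
  assert (T1 : (1 - eps) * S <= T) by (unfold T, S; nra).
  assert (T2 : T <= (1 + eps) * S) by (unfold T, S; nra).
  pose proof (rnd_a p emin emax T sigma Hp Hex ltac:(nra) Rs RNs) as Es.
  fold u eps in Es. apply Rabs_le_inv in Es.
  assert (G1 : (1 - eps) * ((1 - eps) * S) <= sigma) by nra.
  assert (G2 : sigma <= (1 + eps) * ((1 + eps) * S)) by nra.
  assert (sig0 : 0 < sigma).
  { assert (0 < (1 - eps) * ((1 - eps) * S)) by (repeat apply Rmult_lt_0_compat; lra). lra. }
  set (t := sqrt sigma) in *.
  assert (Htt : t * t = sigma) by (apply sqrt_sqrt; lra).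
  assert (t0 : 0 < t) by (unfold t; apply sqrt_lt_R0; lra).
  set (s := sqrt S).
  assert (Hss : s * s = S) by (apply sqrt_sqrt; lra).
  assert (s0 : 0 < s) by (unfold s; apply sqrt_lt_R0; lra).
  assert (L1 : (1 - eps) * s <= t) by (apply sq_ge; nra).
  assert (L2 : t <= (1 + eps) * s) by (apply sq_ge; nra).
  destruct RNt as [Frho [Hn _]].
  destruct RNs as [Fsig _].
  destruct Rt as [Z0|[Rt1 Rt2]]; [lra|].
  rewrite Rabs_right in Rt1, Rt2 by lra.
  pose proof (rel_b p emin emax t rho Hp Hu4 t0 Rt1 Rt2 ltac:(rewrite Htt; exact Fsig) Hn) as Et.
  fold u in Et.
  set (a := sqrt (1 + 2 * u)) in *.
  assert (Ha : a * a = 1 + 2 * u) by (apply sqrt_sqrt; lra).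
  assert (a0 : 0 <= a) by apply sqrt_pos.
  assert (a1 : 1 <= a) by (apply sq_ge; nra).
  set (d := 1 - 1 / a) in *.
  assert (D0 : 0 <= d).
  { unfold d, Rdiv. rewrite Rmult_1_l. assert (/ a <= 1). { rewrite <- Rinv_1. apply Rinv_le_contravar; lra. } lra. }
  assert (D1 : d < 1) by (unfold d; assert (0 < 1 / a) by (apply Rdiv_lt_0_compat; lra); lra).
  apply Rabs_le_inv in Et.
  set (q := rho / s).
  assert (Hq : rho = q * s) by (unfold q; field; lra).
  assert (Q1 : (1 - d) * (1 - eps) <= q).
  { apply Rmult_le_reg_r with s; [lra|]. rewrite <- Hq. nra. }
  assert (Q2 : q <= (1 + d) * (1 + eps)).
  { apply Rmult_le_reg_r with s; [lra|]. rewrite <- Hq. nra. }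
  assert (BU : (1 + d) * (1 + eps) - 1 = B).
  { unfold B, d, eps. fold a.
    assert (Hu' : u = (a * a - 1) / 2) by lra. rewrite Hu'. field. split; lra. }
  assert (BL : 1 - (1 - d) * (1 - eps) <= B).
  { assert (Hu' : u = (a * a - 1) / 2) by lra.
    assert (B - (1 - (1 - d) * (1 - eps)) = 2 * u * (a - 1) / (a * (1 + u))).
    { unfold B, d, eps. fold a. rewrite Hu'. field. split; lra. }
    assert (0 <= 2 * u * (a - 1) / (a * (1 + u))).
    { apply Rmult_le_pos; [nra|]. left; apply Rinv_0_lt_compat; nra. }
    lra. }
  apply Rabs_le. lra.
Qed.
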